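(* Let $m\ge1$ and $0\le r<q-1$. Then there exists a codeword $\mathbf{c}\in RM_q(r,m)$ such that $w_1(\mathbf{c})=d_1(RM_q(r,m))$ and $\chi_1(\mathbf{c})$ is a successive subset of $\mathbb{Z}_{q^m}$ with $1\notin\chi_1(\mathbf{c})$ unless $\chi_1(\mathbf{c})=\mathbb{Z}_{q^m}$.
   Context: Fix an enumeration $\mathbb{F}_q=\{\alpha_1=0,\alpha_2,\dots,\alpha_q\}$ and order $\mathbb{F}_q$ by $\alpha_1<\dots<\alpha_q$; order $\mathbb{F}_q^m$ lexicographically as $P_1<\dots<P_{q^m}$. $RM_q(r,m)=\{(f(P_1),\dots,f(P_{q^m})) : f\in\mathbb{F}_q[X_1,\dots,X_m],\ \deg f\le r\}$. $\mathbb{Z}_L=\{1,\dots,L\}$ with indices cyclic mod $L$. $\chi_1(\mathbf{c})$ is the Hamming support of $\mathbf{c}$ and $w_1$ the Hamming weight. For $J\subseteq\mathbb{Z}_L$, a hole of $J$ of size $h\ge1$ is a set $\{a+1,\dots,a+h\}\subseteq\mathbb{Z}_L\setminus J$ (indices mod $L$) with $a,a+h+1\in J$; $J$ is a successive subset if it has at most one hole. *)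

(* Defs.v *)
From HB Require Import structures.
From mathcomp Require Import all_boot all_order all_algebra all_field.
From mathcomp Require Import mpoly.
From mathcomp Require Import boolp.
Set Implicit Arguments. Unset Strict Implicit. Unset Printing Implicit Defensive.
Import GRing.Theory.

Section RM.
Variable F : finFieldType.
Local Notation q := #|F|.

Lemma card_ff_gt0 : 0 < q.
Proof. by apply/card_gt0P; exists 0%R. Qed.

Definition digit (i j : nat) : 'I_q :=
  Ordinal (ltn_pmod (i %/ q ^ j) card_ff_gt0).

(* Positions are 0-based:
   position i (i = 0 .. q^m - 1) is the paper's index i+1.
   Coordinate j (0-based, the most significant being j = 0) of P_{i+1}
   is alpha_(digit) where the digits of i in base q are read with the
   first coordinate most significant; since alpha is order-preserving
   from 'I_q (0-based) onto (F, <), this is the lexicographic order. *)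
Definition lexpt (alpha : 'I_q -> F) (m : nat) (i : 'I_(q ^ m)) : 'I_m -> F :=
  fun j => alpha (digit i (m - 1 - j)).

(* Reed-Muller code RM_q(r,m): evaluation vectors of polynomials in m
   variables of total degree <= r.  (msize p = 1 + total degree, 0 for p = 0.) *)
Definition inRM (alpha : 'I_q -> F) (r m : nat) (c : {ffun 'I_(q ^ m) -> F}) : Prop :=
  exists p : {mpoly F[m]}, msize p <= r.+1 /\ forall i, c i = meval (lexpt alpha i) p.

End RM.

Definition supp (F : finFieldType) (N : nat) (c : {ffun 'I_N -> F}) : {set 'I_N} :=
  [set i | c i != 0%R].
Definition wt (F : finFieldType) (N : nat) (c : {ffun 'I_N -> F}) : nat := #|supp c|.

(* d_1(C): minimum Hamming weight of a nonzero codeword of C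
   (= first generalized Hamming weight = minimum distance of a linear code). *)
Definition d1 (F : finFieldType) (N : nat) (C : {ffun 'I_N -> F} -> Prop) : nat :=
  \big[minn/N]_(c : {ffun 'I_N -> F} | `[< C c >] && (c != 0%R)) wt c.

(* Cyclic membership in Z_L (0-based): the nat x denotes the element x mod L. *)
Definition memZ (L : nat) (J : {set 'I_L}) (x : nat) : bool :=
  [exists i in J, val i == x %% L].

Definition is_hole (L : nat) (J : {set 'I_L}) (a h : nat) : Prop :=
  [/\ 1 <= h, memZ J a, memZ J (a + h + 1) &
      forall k, 1 <= k <= h -> ~~ memZ J (a + k)].

Definition hole_set (L : nat) (a h : nat) : {set 'I_L} :=
  [set i : 'I_L | [exists k : 'I_h.+1, (0 < val k) && (val i == (a + k) %% L)]].

Definition successive (L : nat) (J : {set 'I_L}) : Prop :=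
  forall a h a' h', is_hole J a h -> is_hole J a' h' ->
    hole_set L a h = hole_set L a' h'.

Arguments inRM {F} alpha r m c.

(* Main.v *)
Require Import Defs.
From HB Require Import structures.
From mathcomp Require Import all_boot all_order all_algebra all_field.
From mathcomp Require Import mpoly.
From mathcomp Require Import boolp.
From mathcomp Require Import zify.
Set Implicit Arguments. Unset Strict Implicit. Unset Printing Implicit Defensive.
Import GRing.Theory.

Section SZ.
Variable F : finFieldType.
Local Notation q := #|F|.
Local Open Scope ring_scope.
Local Notation widen := (widen_ord (leqnSn _)).

Definition mrest n (m : 'X_{1..n.+1}) : 'X_{1..n} := [multinom m (widen i) | i < n].
Definition pc n (p : {mpoly F[n.+1]}) (j : nat) : {mpoly F[n]} :=
  \sum_(m <- msupp p | m ord_max == j) p@_m *: 'X_[mrest m].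
Definition join n (w : 'I_n -> F) (x : F) : {ffun 'I_n.+1 -> F} :=
  [ffun i => if unlift ord_max i is Some j then w j else x].

Lemma joinW n w x (i : 'I_n) : join w x (widen i) = w i.
Proof.
have -> : widen i = lift ord_max i by apply/val_inj; rewrite /= /bump leqNgt ltn_ord.
by rewrite ffunE liftK.
Qed.

Lemma joinM n (w : 'I_n -> F) x : join w x ord_max = x.
Proof. by rewrite ffunE unlift_none. Qed.

Lemma mdeg_rest n (m : 'X_{1..n.+1}) : mdeg m = (mdeg (mrest m) + m ord_max)%N.
Proof.
rewrite !mdegE big_ord_recr /=; congr addn; apply: eq_bigr => i _.
by rewrite mnmE.
Qed.

Lemma meval_pc n (p : {mpoly F[n.+1]}) (w : 'I_n -> F) j :
  meval w (pc p j) = \sum_(m <- msupp p | m ord_max == j)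
     p@_m * \prod_(i < n) w i ^+ m (widen i).
Proof.
rewrite /pc raddf_sum; apply: eq_bigr => m _ /=.
rewrite -mul_mpolyC mevalM mevalC mevalX; congr (_ * _); apply: eq_bigr => i _; by rewrite mnmE.
Qed.

Lemma meval_join n (p : {mpoly F[n.+1]}) w x :
  meval (join w x) p = \sum_(j < msize p) meval w (pc p j) * x ^+ j.
Proof.
under [RHS]eq_bigr do rewrite meval_pc big_distrl /= big_mkcond /=.
rewrite exchange_big /= mevalE big_seq [RHS]big_seq.
apply: eq_bigr => m mp.
have lt : (m ord_max < msize p)%N.
  by apply: leq_ltn_trans (msize_mdeg_lt mp); rewrite mdeg_rest leq_addl.
rewrite [RHS](bigD1 (Ordinal lt)) //= eqxx [X in _ = _ + X]big1 ?addr0; last first.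
  move=> j nj; rewrite (_ : (m ord_max == j) = false) //.
  apply/negbTE; apply: contra nj => /eqP e; apply/eqP/val_inj; by rewrite /= e.
rewrite big_ord_recr /= joinM -mulrA; congr (_ * (_ * _)).
by apply: eq_bigr => i _; rewrite joinW.
Qed.

Lemma msize_pc n (p : {mpoly F[n.+1]}) j : (msize (pc p j) <= msize p - j)%N.
Proof.
rewrite /pc; apply: leq_trans (msize_sum _ _ _) _.
rewrite big_seq_cond; apply: (big_ind (fun x => x <= msize p - j)%N) => //.
  by move=> x y hx hy; rewrite geq_max hx hy.
move=> m /andP[mp /eqP mj]; apply: leq_trans (msizeZ_le _ _) _.
rewrite msizeX; have := msize_mdeg_lt mp; rewrite mdeg_rest mj; lia.
Qed.


Definition nzeros n (p : {mpoly F[n]}) :=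
  #|[set v : {ffun 'I_n -> F} | meval v p == 0]|.

Lemma card_sum (T : finType) (P : pred T) :
  #|[set v | P v]| = (\sum_(v : T) (P v : nat))%N.
Proof. by rewrite -sum1_card big_mkcond /=; apply: eq_bigr => v _; rewrite inE. Qed.

Lemma join_split n (v : {ffun 'I_n.+1 -> F}) :
  join [ffun i => v (widen i)] (v ord_max) = v.
Proof.
apply/ffunP => i; rewrite ffunE; case: unliftP => [j ->|->] //.
rewrite ffunE; congr (v _); apply/val_inj; by rewrite /= /bump leqNgt ltn_ord.
Qed.

Lemma roots_bound (g : {poly F}) k :
  g`_k != 0 -> (size g <= k.+1)%N -> (#|[set x | root g x]| <= k)%N.
Proof.
move=> gk sg; have g0 : g != 0 by apply: contraNneq gk => ->; rewrite coef0.
have := max_poly_roots g0 (rs := enum [set x | root g x]).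
rewrite enum_uniq cardE => /(_ _ isT) h; rewrite -ltnS; apply: leq_trans sg.
apply: h; apply/allP => x; by rewrite mem_enum inE.
Qed.

Lemma SZ n : forall d (p : {mpoly F[n]}), (msize p <= d.+1)%N ->
  (exists v : {ffun 'I_n -> F}, meval v p != 0) ->
  (nzeros p * q <= d * q ^ n)%N.
Proof.
elim: n => [|n IH] d p hs [v0 hv0].
  rewrite /nzeros (_ : [set v | _] = set0) ?cards0 //.
  apply/setP => v; rewrite !inE.
  have -> : v = v0 by apply/ffunP => -[i hi]; exfalso; by rewrite ltn0 in hi.
  by rewrite (negbTE hv0).
pose S := msize p.
pose K j := [exists w : {ffun 'I_n -> F}, meval w (pc p j) != 0].
have exK : exists j, (j < S)%N && K j.
  move: hv0; rewrite -(join_split v0) meval_join => hsum.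
  have : [exists j : 'I_S, meval [ffun i => v0 (widen i)] (pc p j) != 0].
    apply: contraR hsum => /existsPn H; rewrite big1 ?eqxx // => j _.
    by move: (H j); rewrite negbK => /eqP ->; rewrite mul0r.
  move=> /existsP [j hj]; exists j; rewrite ltn_ord /=.
  by apply/existsP; exists [ffun i => v0 (widen i)].
have bnd : forall j, (j < S)%N && K j -> (j <= S)%N by move=> j /andP[/ltnW].
have [k /andP[ltkS Kk] kmax] := ex_maxnP exK bnd.
have hk0 : forall j (w : {ffun 'I_n -> F}), (k < j)%N -> meval w (pc p j) = 0.
  move=> j w ltkj; case: (ltnP j S) => [ljS|geS].
    apply/eqP; apply: contraTT ltkj => nz; rewrite -leqNgt; apply: kmax.
    by rewrite ljS; apply/existsP; exists w.
  have /eqP -> : pc p j == 0 by rewrite -msize_poly_eq0 -leqn0;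
    apply: leq_trans (msize_pc _ _) _; rewrite /S in geS; lia.
  by rewrite meval0.
have kd : (k <= d)%N.
  rewrite leqNgt; apply/negP => dk; move: Kk => /existsP [w].
  have /eqP -> : pc p k == 0 by rewrite -msize_poly_eq0 -leqn0;
    apply: leq_trans (msize_pc _ _) _; lia.
  by rewrite meval0 eqxx.
have IHk := IH (d - k)%N (pc p k).
have {IHk} IHk : (nzeros (pc p k) * q <= (d - k) * q ^ n)%N.
  apply: IHk; last by move: Kk => /existsP.
  apply: leq_trans (msize_pc _ _) _; rewrite /S in hs; lia.
set Z := nzeros (pc p k) in IHk.
have hcount : (nzeros p <= Z * q + k * q ^ n)%N.
  rewrite /nzeros card_sum.
  pose h (u : {ffun 'I_n -> F} * F) := join u.1 u.2.
  have hb : bijective h.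
    exists (fun v : {ffun 'I_n.+1 -> F} => ([ffun i => v (widen i)], v ord_max)).
      move=> [w x]; rewrite /h /=; congr pair; last by rewrite joinM.
      by apply/ffunP => i; rewrite ffunE joinW.
    by move=> v; rewrite /h /= join_split.
  rewrite (reindex h) /=; last by apply: onW_bij.
  rewrite -(pair_big predT predT (fun (w : {ffun 'I_n -> F}) (x : F) => (meval (join w x) p == 0 : nat))) /=.
  rewrite /Z /nzeros card_sum big_distrl /=.
  have -> : (k * q ^ n = \sum_(w : {ffun 'I_n -> F}) k)%N.
    by rewrite sum_nat_const card_ffun card_ord mulnC.
  rewrite -big_split /=; apply: leq_sum => w _.
  case: eqP => [_|/eqP nz].
    rewrite mul1n -[X in (X <= _)%N]addn0 leq_add //.
    by rewrite -sum1_card; apply: leq_sum => x _; case: (_ == 0).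
  rewrite mul0n add0n.
  pose g := \poly_(j < S) meval w (pc p j).
  have -> : (\sum_x (meval (join w x) p == 0%R : nat) = #|[set x | root g x]|)%N.
    rewrite card_sum; apply: eq_bigr => x _.
    by rewrite /root horner_poly meval_join.
  apply: roots_bound; first by rewrite coef_poly ltkS.
  apply/leq_sizeP => j hj; rewrite coef_poly; case: ifP => // _.
  by apply: hk0.
rewrite expnS.
have : (nzeros p * q <= (Z * q + k * q ^ n) * q)%N by rewrite leq_mul2r hcount orbT.
move=> H1; apply: leq_trans H1 _; rewrite mulnDl.
apply: leq_trans (leq_add (leq_mul IHk (leqnn q)) (leqnn _)) _.
by rewrite -!mulnA -mulnDl subnK // (mulnC (q ^ n)%N).
Qed.

End SZ.

Lemma mod_split a q Q : 0 < q -> a %% (Q * q) = (a %/ q %% Q) * q + a %% q.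
Proof.
move=> q0; have [->|Q0] := posnP Q; first by rewrite mul0n !modn0 -divn_eq.
rewrite {1}(divn_eq a q) {1}(divn_eq (a %/ q) Q) mulnDl -addnA -mulnA modnMDl.
apply: modn_small.
have h1 := ltn_pmod (a %/ q) Q0; have h2 := ltn_pmod a q0.
set y := a %/ q %% Q in h1 *; set z := a %% q in h2 *; nia.
Qed.

Lemma digits_inj q m a b : 0 < q ->
  (forall j, j < m -> (a %/ q ^ j) %% q = (b %/ q ^ j) %% q) ->
  a %% q ^ m = b %% q ^ m.
Proof.
move=> q0; elim: m a b => [|m IH] a b H; first by rewrite !modn1.
rewrite expnSr !mod_split //; congr (_ * _ + _); last first.
  by have := H 0 isT; rewrite expn0 !divn1.
apply: IH => j lt; have := H j.+1 lt; by rewrite expnS !divnMA.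
Qed.

Lemma card_lt N T : T <= N -> #|[set i : 'I_N | i < T]| = T.
Proof.
move=> TN.
have -> : [set i : 'I_N | i < T] = [set widen_ord TN j | j in [set: 'I_T]].
  apply/setP => i; rewrite inE; apply/idP/imsetP => [lt|[j _ ->]]; last by rewrite /=; apply: ltn_ord.
  by exists (Ordinal lt) => //; apply/val_inj.
rewrite card_imset ?cardsT ?card_ord // => x y /(congr1 val) /= e; exact/val_inj.
Qed.

Lemma card_ge N T : T <= N -> #|[set i : 'I_N | T <= i]| = N - T.
Proof.
move=> TN; have := cardsC [set i : 'I_N | i < T]; rewrite card_lt // card_ord.
have -> : [set i : 'I_N | T <= i] = ~: [set i : 'I_N | i < T].
  by apply/setP => i; rewrite !inE -leqNgt.
lia.
Qed.

Section Succ.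
Variables (L T : nat) (L0 : 0 < L).
Let J := [set i : 'I_L | T <= i].

Lemma memZ_J x : memZ J x = (T <= x %% L).
Proof.
apply/existsP/idP => [[i /andP[]]|h]; first by rewrite inE => h /eqP <-.
by exists (Ordinal (ltn_pmod x L0)); rewrite inE h eqxx.
Qed.

Lemma hole_J a h : is_hole J a h -> hole_set L a h = [set i : 'I_L | i < T].
Proof.
case=> h1; rewrite !memZ_J => Ha Hb Hk.
have Hk' : forall k, 1 <= k <= h -> (a + k) %% L < T.
  by move=> k hk; have := Hk k hk; rewrite memZ_J ltnNge.
have AL : a %% L = L.-1.
  have := Hk' 1 (h1 : 1 <= 1 <= h); have aL := ltn_pmod a L0.
  case: (ltnP (a %% L).+1 L) => [lt|ge]; last by lia.
  by rewrite -modnDml modn_small ?addn1 //; lia.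
have key : forall j, 1 <= j -> (a + j) %% L = (j - 1) %% L.
  move=> j j1; rewrite -modnDml AL.
  have -> : (L.-1 + j = L + (j - 1))%N by lia.
  by rewrite modnDl.
have TL : T < L by move: Ha; rewrite AL; lia.
have hT : h = T.
  apply/eqP; rewrite eqn_leq; apply/andP; split.
    rewrite leqNgt; apply/negP => Th.
    have := Hk' T.+1; rewrite key // subn1 /= modn_small // ltnn.
    by move=> /(_ Th).
  move: Hb; rewrite -addnA key ?addn1 // subn1 /=.
  by move=> /leq_trans; apply; apply: leq_mod.
subst h; apply/setP => i; rewrite !inE; apply/existsP/idP.
  move=> [k /andP[k0 /eqP ->]]; rewrite key // modn_small; have := ltn_ord k; lia.
move=> iT; exists (Ordinal (iT : i.+1 < T.+1)) => /=.
by rewrite key // subn1 /= modn_small ?eqxx //; apply: ltn_ord.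
Qed.

Lemma succ_J : successive J.
Proof. by move=> a h a' h' /hole_J -> /hole_J ->. Qed.

End Succ.

Lemma bigmin_le (T : eqType) (s : seq T) (P : pred T) (f : T -> nat) N j :
  j \in s -> P j -> \big[minn/N]_(i <- s | P i) f i <= f j.
Proof.
elim: s => // x s IH; rewrite inE big_cons => /orP [/eqP <-|js] Pj.
  by rewrite Pj geq_minl.
case: (P x); last exact: IH.
exact: leq_trans (geq_minr _ _) (IH js Pj).
Qed.

Section Main.
Variables (F : finFieldType) (alpha : 'I_#|F| -> F) (alpha_bij : bijective alpha)
  (m r : nat) (hm : 1 <= m) (hr : r < #|F| - 1).
Local Notation q := #|F|.
Local Notation L := (q ^ m).
Local Notation Q := (q ^ (m - 1)).

Let q0 : 0 < q := card_ff_gt0 F.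
Let LQ : L = Q * q.
Proof. by rewrite -expnSr; congr (_ ^ _); lia. Qed.
Let Q0 : 0 < Q. Proof. by rewrite expn_gt0 q0. Qed.

Definition pts (i : 'I_L) : {ffun 'I_m -> F} := [ffun j => lexpt alpha i j].

Lemma pts_inj : injective pts.
Proof.
move=> i i' /ffunP e; apply/val_inj => /=.
have := @digits_inj q m i i' q0; rewrite !modn_small //; apply => j jm.
have j'm : m - 1 - j < m by lia.
have := e (Ordinal j'm); rewrite !ffunE /lexpt /=.
have -> : m - 1 - (m - 1 - j) = j by lia.
by move=> /(bij_inj alpha_bij) /(congr1 val).
Qed.

Lemma zeros_le (p : {mpoly F[m]}) (c : {ffun 'I_L -> F}) :
  (forall i, c i = meval (lexpt alpha i) p) ->
  #|[set i | c i == 0%R]| <= nzeros p.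
Proof.
move=> hc; rewrite -(card_imset _ pts_inj); apply: subset_leq_card.
apply/subsetP => v /imsetP [i]; rewrite !inE hc => /eqP h ->.
by rewrite (meval_eq _ (fun j => ffunE _ _)) h.
Qed.

Lemma wt_lower c : inRM alpha r m c -> c != 0%R -> L * q <= wt c * q + r * L.
Proof.
move=> [p [hs hc]] nz.
have [i ci] : exists i, c i != 0%R.
  have : [exists i, c i != 0%R].
    apply: contraR nz => /existsPn h; apply/eqP/ffunP => i; rewrite ffunE.
    by move: (h i); rewrite negbK => /eqP.
  by move=> /existsP.
have hsz : nzeros p * q <= r * L.
  apply: SZ hs _; exists (pts i); by rewrite (meval_eq _ (fun j => ffunE _ _)) -hc.
have hz := zeros_le hc.
have hC := cardsC (supp c).
have e : ~: supp c = [set i | c i == 0%R] by apply/setP => j; rewrite !inE negbK.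
rewrite e card_ord in hC.
rewrite /wt; move: hC hz hsz.
set Z := #|[set _ | _]|; set W := #|supp c|; set N := nzeros p; nia.
Qed.

Let x0 : 'I_m := Ordinal hm.
Definition p0 : {mpoly F[m]} := (\prod_(k : 'I_q | (k < r)%N) ('X_x0 - (alpha k)%:MP))%R.
Definition c0 : {ffun 'I_L -> F} := [ffun i => meval (lexpt alpha i) p0].

Lemma meval_p0 (v : 'I_m -> F) : meval v p0 = (\prod_(k : 'I_q | (k < r)%N) (v x0 - alpha k))%R.
Proof.
rewrite /p0 rmorph_prod; apply: eq_bigr => k _.
by rewrite rmorphB /= mevalXU mevalC.
Qed.

Lemma p0_size : msize p0 <= r.+1.
Proof.
have : (p0 != 0%R) && (msize p0 <= (\sum_(k : 'I_q | k < r) 1).+1).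
  apply: (big_rec2 (fun N p => (p != 0%R) && (msize p <= N.+1))).
    by rewrite oner_neq0 msize1.
  move=> k N p _ /andP[pn ps].
  set f := ('X_x0 - (alpha k)%:MP)%R.
  have fn : f != 0%R.
    apply/negP => /eqP f0.
    have := congr1 (meval (fun _ => alpha k + 1)%R) f0.
    rewrite meval0 rmorphB /= mevalXU mevalC addrAC subrr add0r.
    by move/eqP; rewrite oner_eq0.
  have fs : msize f <= 2.
    apply: leq_trans (msizeD_le _ _) _; rewrite msizeN geq_max.
    apply/andP; split; first by rewrite msizeX mdeg1.
    by rewrite msizeC; case: (_ != _).
  rewrite mulf_neq0 //= msizeM //; move: (msize f) (msize p) fs ps => a b; lia.
rewrite sum1dep_card card_lt; last by lia.
by move=> /andP[].
Qed.

Lemma supp_c0 (i : 'I_L) : (i \in supp c0) = (r * Q <= i).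
Proof.
rewrite inE ffunE meval_p0 /lexpt subn0.
set dg := digit F i (m - 1).
have dgv : val dg = i %/ Q.
  rewrite /= modn_small // ltn_divLR // mulnC -LQ; exact: ltn_ord.
apply/prodf_neq0/idP.
  move=> H; rewrite -leq_divRL // -dgv leqNgt; apply/negP => lt.
  by have := H dg lt; rewrite subrr eqxx.
move=> h k kr; rewrite subr_eq0; apply/negP => /eqP /(bij_inj alpha_bij) e.
by move: kr; rewrite -e dgv ltnNge leq_divRL // h.
Qed.

Lemma supp_c0E : supp c0 = [set i : 'I_L | r * Q <= i].
Proof. by apply/setP => i; rewrite supp_c0 inE. Qed.

Lemma TL : r * Q < L.
Proof. rewrite LQ mulnC ltn_pmul2l //; lia. Qed.

Lemma wt_c0 : wt c0 = L - r * Q.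
Proof. by rewrite /wt supp_c0E card_ge // ltnW // TL. Qed.

Lemma c0_inRM : inRM alpha r m c0.
Proof. by exists p0; split; [exact: p0_size | move=> i; rewrite ffunE]. Qed.

Lemma c0_neq0 : c0 != 0%R.
Proof.
have L0 : 0 < L by rewrite expn_gt0 q0.
apply/negP => /eqP e.
have lt : L.-1 < L by rewrite ltn_predL.
have h := supp_c0 (Ordinal lt); rewrite e inE ffunE eqxx /= in h.
move/esym/negbT: h; rewrite -ltnNge /= => h; move: h L0; have := TL; move: (r * Q) L => a b; lia.
Qed.

Lemma d1_eq : d1 (inRM alpha r m) = wt c0.
Proof.
rewrite /d1; apply/eqP; rewrite eqn_leq; apply/andP; split.
  apply: bigmin_le; first exact: mem_index_enum.
  by rewrite c0_neq0 andbT; apply/asboolP; exact: c0_inRM.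
apply: (big_ind (fun x => wt c0 <= x)).
- by rewrite /wt (leq_trans (max_card _)) // card_ord.
- by move=> x y hx hy; rewrite leq_min hx hy.
move=> c /andP[/asboolP hc nz]; have := wt_lower hc nz; rewrite wt_c0.
move: (@wt F (#|F| ^ m) c) => w; rewrite LQ => H; rewrite -(leq_pmul2r q0) mulnBl; nia.
Qed.

End Main.

Unset Implicit Arguments.
Set Strict Implicit.

Theorem mainTheorem8 (F : finFieldType) (alpha : 'I_#|F| -> F)
    (alpha_bij : bijective alpha)
    (alpha0 : forall i : 'I_#|F|, val i = 0 -> alpha i = 0%R)
    (m r : nat) (hm : 1 <= m) (hr : r < #|F| - 1) :
  exists c : {ffun 'I_(#|F| ^ m) -> F},
    [/\ inRM alpha r m c,
        wt c = d1 (inRM alpha r m),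
        successive (supp c) &
        (supp c = [set: 'I_(#|F| ^ m)] \/
         forall i : 'I_(#|F| ^ m), val i = 0 -> i \notin supp c)].
Proof.
exists (c0 alpha r hm); split.
- exact: c0_inRM.
- by rewrite (d1_eq alpha_bij hm hr).
- rewrite (supp_c0E alpha_bij hm hr); apply: succ_J.
  by rewrite expn_gt0 card_ff_gt0.
- case: (posnP r) => [r0|rpos].
    left; apply/setP => i; rewrite (supp_c0 alpha_bij hm hr) inE r0 mul0n.
    exact: leq0n.
  right => i i0; rewrite (supp_c0 alpha_bij hm hr) i0 -ltnNge muln_gt0 rpos.
  by rewrite expn_gt0 card_ff_gt0.
Qed.
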